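(* Consider the asynchronous Sinkhorn iteration described in the context, started from any $v^{(0)}\in\mathbb R_{++}^Y$. Then: (i) $u^{(\ell)}$ and $\alpha^{(\ell)}=\varepsilon\log u^{(\ell)}$ are (componentwise) nondecreasing in $\ell$, $v^{(\ell)}$ and $\beta^{(\ell)}=\varepsilon\log v^{(\ell)}$ are nonincreasing in $\ell$, and $q^{(\ell)}$ is nondecreasing in $\ell$; (ii) for every $\ell\ge1$, $\sum_y\pi^{(\ell)}(x,y)\le\mu(x)$ for all $x$ and $\sum_x\pi^{(\ell)}(x,y)\le\nu(y)$ for all $y$; (iii) there exists $y^*\in Y$ with $v^{(\ell)}(y^* )=v^{(0)}(y^* )$ for all $\ell$.
   Context: $X,Y$ finite sets, $\mu\in\mathcal P(X)$, $\nu\in\mathcal P(Y)$ with strictly positive entries, $c\in\mathbb R_+^{X\times Y}$, $\varepsilon>0$, and kernel $K(x,y)=\exp(-c(x,y)/\varepsilon)\mu(x)\nu(y)$. The asynchronous Sinkhorn iteration: given $v^{(0)}\in\mathbb R_{++}^Y$, for $\ell\ge0$ set $u^{(\ell+1)}=\mu\oslash(Kv^{(\ell)})$, $\hat v^{(\ell+1)}=\nu\oslash(K^\top u^{(\ell+1)})$, $v^{(\ell+1)}=\min\{v^{(\ell)},\hat v^{(\ell+1)}\}$ (componentwise minimum), $\pi^{(\ell+1)}=\mathrm{diag}(u^{(\ell+1)})K\mathrm{diag}(v^{(\ell+1)})$, $q^{(\ell+1)}=\sum_{x,y}\pi^{(\ell+1)}(x,y)$. Here $\oslash$ is componentwise division.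 *)

(* Defs.v *)
From HB Require Import structures.
From mathcomp Require Import all_boot all_order all_algebra.
From mathcomp Require Import all_classical all_reals all_analysis.
Set Implicit Arguments. Unset Strict Implicit. Unset Printing Implicit Defensive.
Import Order.TTheory GRing.Theory Num.Theory.
Local Open Scope ring_scope.

Section Sinkhorn.
Variables (R : realType) (X Y : finType).
Variables (mu : X -> R) (nu : Y -> R) (c : X -> Y -> R) (eps : R).

Definition kernel (x : X) (y : Y) : R := expR (- c x y / eps) * mu x * nu y.

Definition u_of (v : Y -> R) : X -> R :=
  fun x => mu x / \sum_(y : Y) kernel x y * v y.

Definition vhat_of (u : X -> R) : Y -> R :=
  fun y => nu y / \sum_(x : X) kernel x y * u x.

Variable v0 : Y -> R.

Fixpoint async_v (l : nat) : Y -> R :=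
  match l with
  | 0 => v0
  | l'.+1 => fun y => Num.min (async_v l' y) (vhat_of (u_of (async_v l')) y)
  end.

(* u^(l) for l >= 1: u^(l) = mu ./ (K v^(l-1)); async_u 0 is meaningless *)
Definition async_u (l : nat) : X -> R := u_of (async_v l.-1).

Definition async_pi (l : nat) (x : X) (y : Y) : R :=
  async_u l x * kernel x y * async_v l y.

Definition async_q (l : nat) : R := \sum_(x : X) \sum_(y : Y) async_pi l x y.

End Sinkhorn.

(* Main.v *)
Require Import Defs.
From HB Require Import structures.
From mathcomp Require Import all_boot all_order all_algebra.
From mathcomp Require Import all_classical all_reals all_analysis.
Import Order.TTheory GRing.Theory Num.Theory.
Local Open Scope ring_scope.

Theorem mainTheorem3 (R : realType) (X Y : finType)
  (mu : X -> R) (nu : Y -> R) (c : X -> Y -> R) (eps : R) (v0 : Y -> R)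
  (hmu_pos : forall x, 0 < mu x) (hmu_sum : \sum_(x : X) mu x = 1)
  (hnu_pos : forall y, 0 < nu y) (hnu_sum : \sum_(y : Y) nu y = 1)
  (hc : forall x y, 0 <= c x y) (heps : 0 < eps)
  (hv0 : forall y, 0 < v0 y) :
  let u := async_u mu nu c eps v0 in
  let v := async_v mu nu c eps v0 in
  let pi := async_pi mu nu c eps v0 in
  let q := async_q mu nu c eps v0 in
  (* (i) monotonicity *)
  ((forall l, (1 <= l)%N -> forall x,
      u l x <= u l.+1 x /\ eps * ln (u l x) <= eps * ln (u l.+1 x)) /\
   (forall l y, v l.+1 y <= v l y /\ eps * ln (v l.+1 y) <= eps * ln (v l y)) /\
   (forall l, (1 <= l)%N -> q l <= q l.+1)) /\
  (* (ii) marginal constraints *)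
  (forall l, (1 <= l)%N ->
     (forall x, \sum_(y : Y) pi l x y <= mu x) /\
     (forall y, \sum_(x : X) pi l x y <= nu y)) /\
  (* (iii) a coordinate of v never moves *)
  (exists ystar : Y, forall l, v l ystar = v0 ystar).
Proof.
move=> u v pi q.
set K := Defs.kernel mu nu c eps.
have Kpos : forall x y, 0 < K x y.
  by move=> x y; rewrite /K /Defs.kernel !mulr_gt0 ?expR_gt0.
have [x0 _] : exists x : X, true.
  case: (pickP X) => [x _|h]; first by exists x.
  by move: hmu_sum; rewrite big_pred0 // => /esym/eqP; rewrite oner_eq0.
have [y0 _] : exists y : Y, true.
  case: (pickP Y) => [y _|h]; first by exists y.
  by move: hnu_sum; rewrite big_pred0 // => /esym/eqP; rewrite oner_eq0.
have sumX_gt0 : forall F : X -> R, (forall x, 0 < F x) -> 0 < \sum_x F x.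
  move=> F hF; rewrite (bigD1 x0) //= ltr_pwDl // sumr_ge0 // => i _.
  exact: ltW.
have sumY_gt0 : forall F : Y -> R, (forall y, 0 < F y) -> 0 < \sum_y F y.
  move=> F hF; rewrite (bigD1 y0) //= ltr_pwDl // sumr_ge0 // => i _.
  exact: ltW.
set row := fun (w : Y -> R) x => \sum_y K x y * w y.
set col := fun (w : X -> R) y => \sum_x K x y * w x.
have uE : forall w x, u_of mu nu c eps w x = mu x / row w x by [].
have vhE : forall w y, vhat_of mu nu c eps w y = nu y / col w y by [].
have vS : forall l y, v l.+1 y = Order.min (v l y) (vhat_of mu nu c eps (u_of mu nu c eps (v l)) y) by [].
have uS : forall l, u l.+1 = u_of mu nu c eps (v l) by [].
have rowpos : forall w, (forall y, 0 < w y) -> forall x, 0 < row w x.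
  by move=> w hw x; apply: sumY_gt0 => y; rewrite mulr_gt0.
have colpos : forall w, (forall x, 0 < w x) -> forall y, 0 < col w y.
  by move=> w hw y; apply: sumX_gt0 => x; rewrite mulr_gt0.
have upos : forall w, (forall y, 0 < w y) -> forall x, 0 < u_of mu nu c eps w x.
  by move=> w hw x; rewrite uE divr_gt0 // rowpos.
have vhpos : forall w, (forall x, 0 < w x) -> forall y, 0 < vhat_of mu nu c eps w y.
  by move=> w hw y; rewrite vhE divr_gt0 // colpos.
have vpos : forall l y, 0 < v l y.
  elim=> [|l IH] y; first exact: hv0.
  by rewrite vS lt_min IH /= vhpos // => x; apply: upos.
have upos' : forall l x, 0 < u_of mu nu c eps (v l) x.
  by move=> l x; apply: upos.
have vdec : forall l y, v l.+1 y <= v l y.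
  by move=> l y; rewrite vS ge_min lexx.
have vlevh : forall l y, v l.+1 y <= vhat_of mu nu c eps (u_of mu nu c eps (v l)) y.
  by move=> l y; rewrite vS ge_min lexx orbT.
have vanti : forall k l y, (k <= l)%N -> v l y <= v k y.
  move=> k l y; elim: l => [|l IH]; first by rewrite leqn0 => /eqP ->.
  rewrite leq_eqVlt => /orP [/eqP <- //| hk].
  exact: le_trans (vdec l y) (IH hk).
have rowmono : forall w1 w2, (forall y, w1 y <= w2 y) -> forall x, row w1 x <= row w2 x.
  by move=> w1 w2 h x; apply: ler_sum => y _; rewrite ler_wpM2l // ltW.
have colmono : forall w1 w2, (forall x, w1 x <= w2 x) -> forall y, col w1 y <= col w2 y.
  by move=> w1 w2 h y; apply: ler_sum => x _; rewrite ler_wpM2l // ltW.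
have umono : forall l x, u_of mu nu c eps (v l) x <= u_of mu nu c eps (v l.+1) x.
  move=> l x; rewrite !uE; apply: ler_wpM2l; first exact: ltW.
  rewrite lef_pV2 ?posrE ?rowpos //; exact: rowmono.
have urow : forall w, (forall y, 0 < w y) -> forall x, u_of mu nu c eps w x * row w x = mu x.
  by move=> w hw x; rewrite uE divfK // gt_eqF // rowpos.
have vhcol : forall w, (forall x, 0 < w x) -> forall y, vhat_of mu nu c eps w y * col w y = nu y.
  by move=> w hw y; rewrite vhE divfK // gt_eqF // colpos.
have piE : forall m x y, pi m.+1 x y = u_of mu nu c eps (v m) x * K x y * v m.+1 y by [].
have rowsum : forall m x, \sum_y pi m.+1 x y = u_of mu nu c eps (v m) x * row (v m.+1) x.
  move=> m x; rewrite /row mulr_sumr; apply: eq_bigr => y _.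
  by rewrite piE mulrA.
have colsum : forall m y, \sum_x pi m.+1 x y = col (u_of mu nu c eps (v m)) y * v m.+1 y.
  move=> m y; rewrite /col mulr_suml; apply: eq_bigr => x _.
  by rewrite piE [_ * K x y]mulrC.
have rowb : forall m x, \sum_y pi m.+1 x y <= mu x.
  move=> m x; rewrite rowsum -(urow (v m) (vpos m) x).
  apply: ler_wpM2l; first exact: ltW.
  by apply: rowmono => y; apply: vdec.
have colb : forall m y, \sum_x pi m.+1 x y <= nu y.
  move=> m y; rewrite colsum -(vhcol _ (upos' m) y) mulrC.
  apply: ler_wpM2r; first by apply/ltW/colpos; exact: upos'.
  exact: vlevh.
have swap : forall (w : Y -> R) (a : X -> R), \sum_y w y * col a y = \sum_x a x * row w x.
  move=> w a; rewrite /col /row.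
  under eq_bigr do rewrite mulr_sumr.
  rewrite exchange_big; apply: eq_bigr => x _; rewrite mulr_sumr.
  apply: eq_bigr => y _.
  by rewrite [K x y * a x]mulrC mulrCA [w y * K x y]mulrC.
have inv : forall m y, v m.+1 y != v0 y -> v m.+1 y * col (u_of mu nu c eps (v m)) y = nu y.
  elim=> [|m IH] y.
    rewrite vS /Order.min; case: ifP => _; first by rewrite eqxx.
    by move=> _; apply: vhcol.
  rewrite vS /Order.min; case: ifP => h hne; last by apply: vhcol.
  exfalso; have e := IH y hne.
  have : nu y < nu y.
    rewrite -{1}e -(vhcol _ (upos' m.+1) y).
    apply: (@le_lt_trans _ _ (v m.+1 y * col (u_of mu nu c eps (v m.+1)) y)).
      apply: ler_wpM2l; first exact: ltW.
      by apply: colmono => x; apply: umono.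
    by rewrite ltr_pM2r // colpos.
  by rewrite ltxx.
have nonempty : forall l, exists y, v l y = v0 y.
  elim=> [|l [y1 hy1]]; first by exists y0.
  case: (pselect (exists y, v l.+1 y = v0 y)) => // hn; exfalso.
  have hall : forall y, v l.+1 y != v0 y.
    by move=> y; apply/eqP => e; apply: hn; exists y.
  have A : \sum_y v l.+1 y * col (u_of mu nu c eps (v l)) y = 1.
    by rewrite -hnu_sum; apply: eq_bigr => y _; apply: inv.
  have : \sum_x u_of mu nu c eps (v l) x * row (v l.+1) x < 1.
    rewrite -hmu_sum [X in _ < X](eq_bigr (fun x => u_of mu nu c eps (v l) x * row (v l) x));
      last by move=> x _; rewrite urow.
    apply: ltr_sum; first by apply/hasP; exists x0; rewrite ?mem_index_enum.
    move=> x _; rewrite ltr_pM2l //.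
    rewrite /row (bigD1 y1) //= [X in _ < X](bigD1 y1) //=.
    apply: ltr_leD.
      move: (hall y1); rewrite -hy1 => hne.
      by rewrite ltr_pM2l // lt_neqAle hne vdec.
    by apply: ler_sum => y _; apply: ler_wpM2l; [exact: ltW | exact: vdec].
  by rewrite -swap A ltxx.
split; [split; [|split] | split].
- case=> [//|m] _ x.
  have e1 : u m.+1 x = u_of mu nu c eps (v m) x by [].
  have e2 : u m.+2 x = u_of mu nu c eps (v m.+1) x by [].
  rewrite e1 e2; have h := umono m x; split => //.
  have p1 := upos' m x; have p2 := upos' m.+1 x.
  try (apply: ler_wpM2l; first exact: ltW heps).
  by rewrite ler_ln ?posrE.
- move=> l y; have h := vdec l y; split => //.
  have p1 := vpos l y; have p2 := vpos l.+1 y.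
  try (apply: ler_wpM2l; first exact: ltW heps).
  by rewrite ler_ln ?posrE.
- case=> [//|m] _; rewrite /q /async_q -/pi.
  rewrite exchange_big [X in _ <= X]exchange_big /=.
  apply: ler_sum => y _; rewrite !colsum.
  rewrite [v m.+2 y]vS /Order.min; case: ifP => _.
    apply: ler_wpM2r; first exact: ltW.
    by apply: colmono => x; apply: umono.
  by rewrite [X in _ <= X]mulrC (vhcol _ (upos' m.+1)) -colsum colb.
- by case=> [//|m] _; split; [apply: rowb | apply: colb].
case: (pselect (exists ystar, forall l, v l ystar = v0 ystar)) => // hn; exfalso.
have : forall y, exists l, v l y != v0 y.
  move=> y; case: (pselect (exists l, v l y != v0 y)) => // h2; exfalso.
  apply: hn; exists y => l.
  by case: (eqVneq (v l y) (v0 y)) => // ne; exfalso; apply: h2; exists l.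
move=> /choice [f hf].
have [y hy] := nonempty (\max_(i : Y) f i)%N.
have h1 := vanti (f y) (\max_(i : Y) f i)%N y (leq_bigmax (F:=f) y).
have h2 := vanti 0 (f y) y (leq0n _).
move: (hf y) => /eqP; apply; apply/eqP; rewrite eq_le h2 /=.
by rewrite -hy.
Qed.
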